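(* Let $f:[0,1]^n\to[0,1]$ be implementable by a Bernoulli factory, and suppose that for some open face $F_{A,S,B}$ of the hypercube we have $f|_{F_{A,S,B}}\not\equiv 1$. Then there exist an integer $m\ge 0$ and a constant $c>0$ such that $1-f(p)\ge c\left((1-p)^A\, p^S(1-p)^S\, p^B\right)^m$ for all $p\in[0,1]^n$.
   Context: A (multiparameter) Bernoulli factory with input $(p_1,\dots,p_n)$ is a (possibly infinite) rooted binary tree in which every node has either $2$ children or $0$ children (leaf). Each internal node is labelled either by an index $i\in[n]$ or by a constant $c\in(0,1)$; each leaf is labelled $0$ or $1$. To execute it with coins $p\in[0,1]^n$, start at the root; at a node labelled $i$ draw a fresh independent Bernoulli($p_i$) sample, at a node labelled $c$ a fresh independent Bernoulli($c$) sample; move to the child corresponding to the outcome; upon reaching a leaf output its label. $f$ is implementable by a Bernoulli factory if there is such a tree which, for every $p\in[0,1]^n$, reaches a leaf almost surely and outputs $1$ with probability exactly $f(p)$. For a partition $[n]=A\sqcup S\sqcup B$, the open face is $F_{A,S,B}=\{p\in[0,1]^n: p_i=0\ (i\in A),\ 0<p_i<1\ (i\in S),\ p_i=1\ (i\in B)\}$. For $T\subseteq[n]$, $p^T=\prod_{i\in T}p_i$, $(1-p)^T=\prod_{i\in T}(1-p_i)$. $f|_X\equiv 1$ means $f$ equals $1$ on all of $X$. *)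

(* Defs.v *)
From HB Require Import structures.
From mathcomp Require Import all_boot all_order all_algebra.
From mathcomp Require Import all_classical all_reals.
From mathcomp Require Import all_analysis.
Import numFieldNormedType.Exports.
Set Implicit Arguments. Unset Strict Implicit. Unset Printing Implicit Defensive.
Import Order.TTheory GRing.Theory Num.Theory.
Local Open Scope ring_scope.

Inductive bf_label (R : Type) (n : nat) :=
  | Coin of 'I_n
  | Const of R
  | Leaf of bool.

(* A (possibly infinite) rooted binary tree is given by the labelling of
   addresses: the node at address w : seq bool (sequence of outcomes taken
   from the root, true = outcome 1) has children w ++ [:: false] and
   w ++ [:: true].  Only addresses whose proper prefixes are all internal
   are actual nodes of the tree; labels elsewhere are irrelevant. *)
Definition bf_tree (R : Type) (n : nat) := seq bool -> bf_label R n.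

Definition step (R : realType) n (p : 'I_n -> R) (l : bf_label R n) (b : bool) : R :=
  match l with
  | Coin i => if b then p i else 1 - p i
  | Const c => if b then c else 1 - c
  | Leaf _ => 0
  end.

(* probability that the execution reaches address w (0 if w is not a node) *)
Definition reach (R : realType) n (t : bf_tree R n) (p : 'I_n -> R) (w : seq bool) : R :=
  \prod_(k < size w) step p (t (take k w)) (nth false w k).

Definition leaf_with (R : Type) n (b : bool) (l : bf_label R n) : bool :=
  if l is Leaf b' then b' == b else false.

Definition out_at (R : realType) n (t : bf_tree R n) (p : 'I_n -> R)
    (b : bool) (d : nat) : R :=
  \sum_(w : d.-tuple bool | leaf_with b (t w)) reach t p w.

Definition in_cube (R : realType) n (p : 'I_n -> R) : Prop :=
  forall i, 0 <= p i <= 1.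

Definition implements (R : realType) n (t : bf_tree R n) (f : ('I_n -> R) -> R) : Prop :=
  (forall w c, t w = Const _ c -> 0 < c < 1) /\
  forall p, in_cube p ->
    ((fun N => \sum_(d < N) (out_at t p false d + out_at t p true d)) @ \oo --> (1 : R))%classic
    /\ ((fun N => \sum_(d < N) out_at t p true d) @ \oo --> f p)%classic.

Definition implementable (R : realType) n (f : ('I_n -> R) -> R) : Prop :=
  exists t : bf_tree R n, implements t f.

Definition partition3 n (A S B : {set 'I_n}) : Prop :=
  [disjoint A & S] /\ [disjoint A & B] /\ [disjoint S & B] /\ A :|: S :|: B = [set: 'I_n]%SET.

Definition in_face (R : realType) n (A S B : {set 'I_n}) (p : 'I_n -> R) : Prop :=
  (forall i, i \in A -> p i = 0) /\ (forall i, i \in S -> 0 < p i < 1) /\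
  (forall i, i \in B -> p i = 1).

(* Main.v *)
Require Import Defs.
From mathcomp Require Import all_boot all_order all_algebra.
From mathcomp Require Import all_classical all_reals.
From mathcomp Require Import all_analysis.
From mathcomp Require Import lra.
Import numFieldNormedType.Exports.
Import Order.TTheory GRing.Theory Num.Theory.
Local Open Scope ring_scope.
Set Implicit Arguments. Unset Strict Implicit.

Lemma abc (R : realType) (a b c : R) : 0 <= a <= 1 -> 0 <= b <= 1 -> 0 <= c <= 1 ->
  [/\ 0 <= a*b*c, a*b*c <= 1, a*b*c <= a, a*b*c <= b & a*b*c <= c].
Proof.
move=> /andP[a0 a1] /andP[b0 b1] /andP[c0 c1].
have ab0 : 0 <= a * b by rewrite mulr_ge0.
have aba : a * b <= a by rewrite ler_piMr.
have abb : a * b <= b by rewrite ler_piMl.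
have abc0 : 0 <= a * b * c by rewrite mulr_ge0.
have abcab : a * b * c <= a * b by rewrite ler_piMr.
split => //; try (apply: le_trans abcab _; by []).
- by apply: le_trans abcab _; apply: le_trans aba _.
- by rewrite ler_piMl // (le_trans aba).
Qed.

Section Aux.
Variables (R : realType) (n : nat).

Lemma sumF_cvg (t : bf_tree R n) f p : implements t f -> in_cube p ->
  ((fun N => \sum_(d < N) out_at t p false d) @ \oo --> 1 - f p)%classic.
Proof.
move=> [_ H] cp; have [H1 H2] := H p cp.
have E : (fun N => \sum_(d < N) out_at t p false d) =
  (fun N => \sum_(d < N) (out_at t p false d + out_at t p true d)
           - \sum_(d < N) out_at t p true d).
  by apply/funext => N; rewrite big_split /= addrK.
by rewrite E; apply: cvgB.
Qed.

Lemma step_ge0 (t : bf_tree R n) p (Hc : forall w c, t w = Const _ c -> 0 < c < 1)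
  w b : in_cube p -> 0 <= step p (t w) b.
Proof.
move=> cp; rewrite /step; case E: (t w) => [i|c|l] //.
  by have /andP[h1 h2] := cp i; case: b; rewrite ?subr_ge0.
have /andP[h1 h2] := Hc _ _ E; case: b; rewrite ?subr_ge0 ltW //.
Qed.

Lemma reach_ge0 (t : bf_tree R n) p (Hc : forall w c, t w = Const _ c -> 0 < c < 1)
  w : in_cube p -> 0 <= reach t p w.
Proof. by move=> cp; apply: prodr_ge0 => k _; apply: step_ge0. Qed.

Lemma prod_le_one_elt (I : finType) (X : {set I}) (F : I -> R) i :
  (forall j, 0 <= F j <= 1) -> i \in X -> \prod_(j in X) F j <= F i.
Proof.
move=> HF iX; rewrite (bigD1 i) //=.
have /andP[h1 h2] := HF i.
have h3 : 0 <= \prod_(j in X | j != i) F j by apply: prodr_ge0 => j _; case/andP: (HF j).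
have h4 : \prod_(j in X | j != i) F j <= 1 by apply: prodr_ile1 => j _; apply: HF.
nra.
Qed.

Definition cstf (l : bf_label R n) (b : bool) : R :=
  match l with Const c => if b then c else 1 - c | _ => 1 end.

End Aux.

Theorem lemma3 (R : realType) (n : nat) (f : ('I_n -> R) -> R)
    (A S B : {set 'I_n}) :
  implementable f -> partition3 A S B ->
  (exists p, in_face A S B p /\ f p <> 1) ->
  exists (m : nat) (c : R), 0 < c /\
    forall p, in_cube p ->
      c * ((\prod_(i in A) (1 - p i)) * (\prod_(i in S) (p i * (1 - p i)))
             * (\prod_(i in B) p i)) ^+ m <= 1 - f p.
Proof.
move=> [t Ht] [_ [_ [_ Hcov]]] [p0 [[HA [HS HB]] Hf]].
have Hc := Ht.1.
have cp0 : in_cube p0.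
  move=> i; have : i \in [set: 'I_n]%SET by rewrite inE.
  rewrite -Hcov !inE => /orP[/orP[/HA->|/HS/andP[h1 h2]]|/HB->];
    by rewrite ?lexx ?ler01 ?ltW.
have [d Hd] : exists d, out_at t p0 false d != 0.
  case: (pselect (exists d, out_at t p0 false d != 0)) => // Hn; exfalso; apply: Hf.
  have E : (fun N => \sum_(d < N) out_at t p0 false d) = fun=> 0.
    apply/funext => N; apply: big1 => d _.
    by apply/eqP; apply/negPn/negP => hd; apply: Hn; exists d.
  have H := sumF_cvg Ht cp0; rewrite E in H.
  have := @cvg_lim _ (@Rhausdorff R) _ _ eventually_filter _ _ H.
  rewrite lim_cst; last exact: Rhausdorff.
  by move=> /esym/eqP; rewrite subr_eq0 => /eqP ->.
have [w /andP[Hw Hr]] : exists w : d.-tuple bool, leaf_with false (t w) && (reach t p0 w != 0).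
  case: (pselect (exists w : d.-tuple bool, leaf_with false (t w) && (reach t p0 w != 0))) => // Hn.
  exfalso; move/eqP: Hd; apply; apply: big1 => w' Hw'.
  by apply/eqP; apply/negPn/negP => hw; apply: Hn; exists w'; rewrite Hw' hw.
set m := size w.
exists m, (\prod_(k < m) cstf (t (take k w)) (nth false w k)).
split.
  apply: prodr_gt0 => k _; rewrite /cstf; case E: (t _) => [i|c|l] //.
  by have /andP[h1 h2] := Hc _ _ E; case: (nth _ _ _); rewrite ?subr_gt0.
move=> p cp.
set Q := _ * _ * _.
have cpi : forall i, 0 <= p i <= 1 by [].
have PA0 : 0 <= \prod_(i in A) (1 - p i) <= 1.
  apply/andP; split; [apply: prodr_ge0 | apply: prodr_ile1] => i _;
    case/andP: (cp i) => h1 h2; rewrite ?subr_ge0 ?gerBl //.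
  by apply/andP; split; rewrite ?subr_ge0 ?gerBl.
have PS0 : 0 <= \prod_(i in S) (p i * (1 - p i)) <= 1.
  apply/andP; split; [apply: prodr_ge0 | apply: prodr_ile1] => i _;
    case/andP: (cp i) => h1 h2; [nra|apply/andP; split; nra].
have PB0 : 0 <= \prod_(i in B) p i <= 1.
  by apply/andP; split; [apply: prodr_ge0 | apply: prodr_ile1] => i _;
    case/andP: (cp i) => h1 h2; rewrite ?h1 ?h2.
have [Q0 Q1 QA QS QB] := abc PA0 PS0 PB0.
have Q01 : 0 <= Q <= 1 by rewrite Q0 Q1.
have QleA : forall i, i \in A -> Q <= 1 - p i.
  move=> i iA; apply: (le_trans QA); apply: (prod_le_one_elt (F := fun j => 1 - p j)) iA.
  by move=> j; case/andP: (cp j) => h1 h2; apply/andP; split; rewrite ?subr_ge0 ?gerBl.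
have QleS : forall i, i \in S -> Q <= p i * (1 - p i).
  move=> i iS; apply: (le_trans QS); apply: (prod_le_one_elt (F := fun j => p j * (1 - p j))) iS.
  by move=> j; case/andP: (cp j) => h1 h2; apply/andP; split; nra.
have QleB : forall i, i \in B -> Q <= p i.
  move=> i iB; apply: (le_trans QB); apply: (prod_le_one_elt (F := fun j => p j)) iB.
  by [].
have Qp : forall i, i \notin A -> Q <= p i.
  move=> i iA; have : i \in [set: 'I_n]%SET by rewrite inE.
  rewrite -Hcov !inE (negbTE iA) /= => /orP[/QleS h|/QleB //].
  case/andP: (cp i) => h1 h2; apply: le_trans h _; nra.
have Qq : forall i, i \notin B -> Q <= 1 - p i.
  move=> i iB; have : i \in [set: 'I_n]%SET by rewrite inE.
  rewrite -Hcov !inE (negbTE iB) orbF => /orP[/QleA //|/QleS h].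
  case/andP: (cp i) => h1 h2; apply: le_trans h _; nra.
have Hreach : (\prod_(k < m) cstf (t (take k w)) (nth false w k)) * Q ^+ m <= reach t p w.
  have -> : Q ^+ m = \prod_(k < m) Q by rewrite prodr_const card_ord.
  rewrite -big_split /=.
  apply: ler_prod => k _.
  have nz : step p0 (t (take k w)) (nth false w k) != 0.
    apply/negP => /eqP z; move/eqP: Hr; apply.
    by rewrite /reach (bigD1 k) //= z mul0r.
  move: nz; rewrite /step /cstf; case E: (t _) => [i|c|l] /= nz.
  - case: (nth _ _ _) nz => nz; rewrite mul1r; case/andP: Q01 => ? ?; rewrite ?(Qp, Qq) ?andbT //.
    + by apply/negP => /HA z; move: nz; rewrite z eqxx.
    + by apply/negP => /HB z; move: nz; rewrite z subrr eqxx.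
  - have /andP[h1 h2] := Hc _ _ E; case/andP: Q01 => ? ?.
    by case: (nth _ _ _); apply/andP; split; nra.
  - by rewrite eqxx in nz.
apply: le_trans Hreach _.
have H := sumF_cvg Ht cp.
set u := (fun N => \sum_(d0 < N) out_at t p false d0) in H.
have hom : {homo u : a b / (a <= b)%N >-> a <= b}.
  apply/nondecreasing_seqP => k; rewrite /u big_ord_recr /= lerDl.
  apply: sumr_ge0 => v _; exact: reach_ge0.
have := nondecreasing_cvgn_le hom (cvgP _ H) d.+1.
rewrite (@cvg_lim _ (@Rhausdorff R) _ _ eventually_filter _ _ H) => h; apply: le_trans h.
rewrite /u big_ord_recr /= -[reach t p w]add0r; apply: lerD.
  by apply: sumr_ge0 => i _; apply: sumr_ge0 => v _; exact: reach_ge0.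
rewrite /out_at (bigD1 w) //= lerDl.
by apply: sumr_ge0 => v _; exact: reach_ge0.
Qed.
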